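(* Let $E$ be a real Banach space, $K\subset E$ nonempty closed convex, $g\in\mathcal F$ totally convex on $E$ satisfying H1–H2, $Y$ a real Banach space containing a closed, convex, pointed cone $C$ with nonempty interior, $f:E\times E\to Y$ and $T:K\to\mathcal P(K)$. Assume B1–B4. Then $DS(f,T)$ is closed and convex.
   Context: $\mathcal F$: functions $g:E\to\mathbb R$ strictly convex, lower semicontinuous, Gâteaux differentiable (derivative $g'$). $D_g(x,y)=g(x)-g(y)-\langle x-y,g'(y)\rangle$; $v_g(x,t)=\inf\{D_g(y,x):\|y-x\|=t\}$; totally convex: $v_g(x,t)>0$ for all $x$, $t>0$. H1: level sets of $D_g(x,\cdot)$ bounded for all $x$; H2: $\inf_{x\in A}v_g(x,t)>0$ for all $t>0$ and bounded $A$. $\Pi^g_D(x)$ = unique minimizer of $D_g(\cdot,x)$ over nonempty closed convex $D$. $\mathrm{Fix}(T)=\{x\in K:x\in T(x)\}$. $T$ quasi $D_g$-nonexpansive: $S(x):=\Pi^g_{T(x)}(x)$ has $\mathrm{Fix}(S)\ne\emptyset$ and $D_g(p,S(x))\le D_g(p,x)$ for $p\in\mathrm{Fix}(S)$, $x\in K$. Demiclosed: $x^k\rightharpoonup\bar x$, $d(x^k,T(x^k))\to0$ imply $\bar x\in\mathrm{Fix}(T)$. Lower semicontinuous at $\bar x$: $x^k\to\bar x$ in $K$, $\bar y\in T(\bar x)$ imply existence of $y^k\in T(x^k)$ with $y^k\to\bar y$. $y\preceq y'$ iff $y'-y\in C$; $C$-convex: $G(tx+(1-t)y)\preceq tG(x)+(1-t)G(y)$.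 B1: $f(x,x)=0$ for all $x$. B2: $f$ uniformly continuous on bounded subsets of $E\times E$. B3: $f(x,\cdot)$ is $C$-convex for all $x$. B4: $T$ has nonempty closed convex values, is demiclosed, lower semicontinuous at each point of $K$, and quasi $D_g$-nonexpansive. $DS(f,T)=\{x\in K:x\in T(x),\ f(y,x)\in-C\ \forall y\in K\}$. *)

(* Defs.v *)
From HB Require Import structures.
From mathcomp Require Import all_boot all_order all_algebra.
From mathcomp Require Import all_classical all_reals all_analysis.
Set Implicit Arguments. Unset Strict Implicit. Unset Printing Implicit Defensive.
Import Order.TTheory GRing.Theory Num.Theory.
Import numFieldNormedType.Exports.
Local Open Scope classical_set_scope.
Local Open Scope ring_scope.

Section Defs.
Context {R : realType}.

Section OnE.
Variable E : normedModType R.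

Definition convex_set_E (A : set E) : Prop :=
  forall x y (t : R), A x -> A y -> 0 <= t <= 1 -> A (t *: x + (1 - t) *: y).

Definition bounded_E (A : set E) : Prop :=
  exists M : R, forall x, A x -> `|x| <= M.

Definition cont_linear_functional (phi : E -> R) : Prop :=
  (forall (a : R) (u v : E), phi (a *: u + v) = a * phi u + phi v)
  /\ continuous phi.

Definition weak_cvg (x : nat -> E) (xbar : E) : Prop :=
  forall phi : E -> R, cont_linear_functional phi ->
    (phi \o x) @ \oo --> phi xbar.

Definition strictly_convex (g : E -> R) : Prop :=
  forall x y (t : R), x != y -> 0 < t < 1 ->
    g (t *: x + (1 - t) *: y) < t * g x + (1 - t) * g y.

Definition gateaux_derivative (g : E -> R) (dg : E -> E -> R) : Prop :=
  forall y, cont_linear_functional (dg y) /\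
    forall h, (fun t : R => t^-1 * (g (y + t *: h) - g y)) @ 0^' --> dg y h.

Definition class_F (g : E -> R) (dg : E -> E -> R) : Prop :=
  strictly_convex g
  /\ lower_semicontinuous (fun x => (g x)%:E)
  /\ gateaux_derivative g dg.

Definition bregman (g : E -> R) (dg : E -> E -> R) (x y : E) : R :=
  g x - g y - dg y (x - y).

(* modulus of total convexity, in the extended reals (inf of empty = +oo) *)
Definition modulus_tc g dg (x : E) (t : R) : \bar R :=
  ereal_inf [set (bregman g dg y x)%:E | y in [set y | `|y - x| = t]].

Definition totally_convex g dg : Prop :=
  forall x (t : R), 0 < t -> (0 < modulus_tc g dg x t)%E.

Definition H1 g dg : Prop :=
  forall x (r : R), bounded_E [set y | bregman g dg x y <= r].

Definition H2 g dg : Prop :=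
  forall (t : R) (A : set E), 0 < t -> bounded_E A ->
    (0 < ereal_inf [set modulus_tc g dg x t | x in A])%E.

Definition is_bregman_proj g dg (D : set E) (x p : E) : Prop :=
  D p /\ forall y, D y -> bregman g dg p x <= bregman g dg y x.

(* distance from a point to a set (extended reals: +oo for the empty set) *)
Definition dist_set (x : E) (A : set E) : \bar R :=
  ereal_inf [set (`|x - y|)%:E | y in A].

Definition Fix (K : set E) (T : E -> set E) : set E :=
  [set x | K x /\ T x x].

Definition FixS g dg (K : set E) (T : E -> set E) : set E :=
  [set p | K p /\ is_bregman_proj g dg (T p) p p].

Definition quasi_Dg_nonexpansive g dg (K : set E) (T : E -> set E) : Prop :=
  (forall x, K x -> exists s, is_bregman_proj g dg (T x) x s)
  /\ (exists p, FixS g dg K T p)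
  /\ (forall p x s, FixS g dg K T p -> K x -> is_bregman_proj g dg (T x) x s ->
        bregman g dg p s <= bregman g dg p x).

Definition demiclosed (K : set E) (T : E -> set E) : Prop :=
  forall (x : nat -> E) (xbar : E), (forall k, K (x k)) -> weak_cvg x xbar ->
    (fun k => dist_set (x k) (T (x k))) @ \oo --> 0%E ->
    Fix K T xbar.

Definition lsc_at (K : set E) (T : E -> set E) (xbar : E) : Prop :=
  forall (x : nat -> E) (ybar : E), (forall k, K (x k)) -> x @ \oo --> xbar ->
    T xbar ybar ->
    exists y : nat -> E, (forall k, T (x k) (y k)) /\ y @ \oo --> ybar.

End OnE.

Section OnY.
Variable Y : normedModType R.

Definition cone_hyp (C : set Y) : Prop :=
  closed C
  /\ convex_set_E C
  /\ (forall (t : R) c, 0 <= t -> C c -> C (t *: c))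
  /\ (forall c, C c -> C (- c) -> c = 0)
  /\ (exists c, interior C c).

Definition cone_le (C : set Y) (y y' : Y) : Prop := C (y' - y).

Definition C_convex (E : normedModType R) (C : set Y) (G : E -> Y) : Prop :=
  forall x y (t : R), 0 <= t <= 1 ->
    cone_le C (G (t *: x + (1 - t) *: y)) (t *: G x + (1 - t) *: G y).

End OnY.

Section Bhyp.
Variables (E Y : normedModType R).

Definition B1 (f : E -> E -> Y) : Prop := forall x, f x x = 0.

Definition B2 (f : E -> E -> Y) : Prop :=
  forall A : set (E * E),
    (exists M : R, forall p, A p -> `|p.1| <= M /\ `|p.2| <= M) ->
    forall eps : R, 0 < eps -> exists2 delta : R, 0 < delta &
      forall p q, A p -> A q -> `|p.1 - q.1| < delta -> `|p.2 - q.2| < delta ->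
        `|f p.1 p.2 - f q.1 q.2| < eps.

Definition B3 (C : set Y) (f : E -> E -> Y) : Prop :=
  forall x, C_convex C (f x).

Definition B4 g dg (K : set E) (T : E -> set E) : Prop :=
  (forall x, K x -> T x !=set0 /\ closed (T x) /\ convex_set_E (T x))
  /\ demiclosed K T
  /\ (forall x, K x -> lsc_at K T x)
  /\ quasi_Dg_nonexpansive g dg K T.

Definition DS (C : set Y) (K : set E) (f : E -> E -> Y) (T : E -> set E) : set E :=
  [set x | K x /\ T x x /\ forall y, K y -> C (- f y x)].

End Bhyp.
End Defs.

(* Main.v *)
Set Warnings "-all".
Require Import Defs.
From HB Require Import structures.
From mathcomp Require Import all_boot all_order all_algebra.
From mathcomp Require Import all_classical all_reals all_analysis.
From mathcomp Require Import ring lra.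
Import Order.TTheory GRing.Theory Num.Theory.
Import numFieldNormedType.Exports.
Local Open Scope classical_set_scope.
Local Open Scope ring_scope.

Set Implicit Arguments.
Section H.
Context {R : realType} {E : normedModType R}.

Lemma lin0 (phi : E -> R) : cont_linear_functional phi -> phi 0 = 0.
Proof.
move=> [L _]; have := L 1 0 0; rewrite scale1r addr0 mul1r => h.
by apply: (addrI (phi 0)); rewrite addr0 -h.
Qed.

Lemma linZ (phi : E -> R) a u : cont_linear_functional phi -> phi (a *: u) = a * phi u.
Proof. move=> hp; have := hp.1 a u 0; rewrite addr0 (lin0 hp) addr0 //. Qed.

Lemma linD (phi : E -> R) u v : cont_linear_functional phi -> phi (u + v) = phi u + phi v.
Proof. move=> hp; have := hp.1 1 u v; rewrite scale1r mul1r //. Qed.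

Lemma linB (phi : E -> R) u v : cont_linear_functional phi -> phi (u - v) = phi u - phi v.
Proof. move=> hp; rewrite linD // -scaleN1r linZ //; ring. Qed.

Variables (g : E -> R) (dg : E -> E -> R).

Lemma bregman_self x : (forall y, cont_linear_functional (dg y)) -> bregman g dg x x = 0.
Proof. move=> hl; rewrite /bregman [x - x]subrr (lin0 (hl x)); ring. Qed.

Lemma bregman_pos y x : totally_convex g dg -> y != x -> 0 < bregman g dg y x.
Proof.
move=> tc yx.
have t0 : 0 < `|y - x| by rewrite normr_gt0 subr_eq0.
have := tc x _ t0.
have : (modulus_tc g dg x (`|y - x|)%R <= (bregman g dg y x)%:E)%E.
  rewrite /modulus_tc; apply: ereal_inf_lbound => /=. by exists y.
move=> h1 h2; have := lt_le_trans h2 h1; by rewrite lte_fin.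
Qed.

Lemma bregman_ge0 y x : totally_convex g dg -> (forall y, cont_linear_functional (dg y)) ->
  0 <= bregman g dg y x.
Proof.
move=> tc hl; have [->|yx] := eqVneq y x; first by rewrite bregman_self.
exact/ltW/bregman_pos.
Qed.

Lemma seq_of_closure (A : set E) x : closure A x ->
  exists u : nat -> E, (forall n, A (u n)) /\ u @ \oo --> x.
Proof.
move=> hx.
have : forall n : nat, exists v, A v /\ `|x - v| < n.+1%:R^-1.
  move=> n; have [v [Av bv]] := hx _ (nbhsx_ballx x (n.+1%:R^-1) ltac:(by []) ).
  by exists v; split => //; move: bv; rewrite -ball_normE.
move=> /choice [u hu]; exists u; split; first by move=> n; case: (hu n).
apply/cvgrPdist_lt => eps eps0.
near=> n.
apply: (lt_trans (hu n).2).
rewrite invf_plt ?posrE ?ltr0Sn //.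
apply: (lt_le_trans (_ : eps^-1 < n%:R)); last by rewrite ler_nat.
by near: n; apply: nbhs_infty_gtr.
Unshelve. all: by end_near.
Qed.
End H.

Unset Implicit Arguments.
Theorem corollary2p18 (R : realType)
  (E : completeNormedModType R) (Y : completeNormedModType R)
  (K : set E) (g : E -> R) (dg : E -> E -> R) (C : set Y)
  (f : E -> E -> Y) (T : E -> set E) :
  K !=set0 -> closed K -> convex_set_E K ->
  class_F g dg -> totally_convex g dg -> H1 g dg -> H2 g dg ->
  cone_hyp C ->
  (forall x, K x -> T x `<=` K) ->
  B1 f -> B2 f -> B3 C f -> B4 g dg K T ->
  closed (DS C K f T) /\ convex_set_E (DS C K f T).
Proof.
move=> _ clK cvK [_ [_ hgd]] tc _ _ [clC [cvC [scC _]]] _ _ hB2 hB3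
  [_ [demi [_ [qS1 [_ qS3]]]]].
have hl : forall y, cont_linear_functional (dg y) by move=> y; case: (hgd y).
have Cadd : forall a b, C a -> C b -> C (a + b).
  move=> a b Ca Cb; have := cvC a b (2^-1) Ca Cb.
  rewrite invr_ge0 ler0n invf_le1 ?ler1n ?ltr0n // => /(_ isT) h.
  have := scC 2 _ (ler0n _ 2) h.
  rewrite scalerDr !scalerA mulfV ?pnatr_eq0 // scale1r.
  have -> : 1 - 2^-1 = (2^-1 : R) by field.
  by rewrite mulfV ?pnatr_eq0 // scale1r.
have FixS_of : forall p, K p -> T p p -> FixS g dg K T p.
  move=> p Kp Tpp; split => //; split => // y _.
  by rewrite bregman_self //; apply: bregman_ge0.
split.
- move=> x /seq_of_closure [u [Du ux]].
  have Kx : K x by apply: (closed_cvg K clK _ _ ux); apply: nearW => n; case: (Du n).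
  split => //; split.
  + have Fx := demi u x (fun n => (Du n).1) _ _.
    apply: (Fx _ _).2.
    * move=> phi hp; exact: cvg_comp ux (hp.2 x).
    * have -> : (fun k => dist_set (u k) (T (u k))) = fun=> 0%E.
        apply/funext => k; apply/eqP; rewrite eq_le; apply/andP; split.
          by apply: ereal_inf_lbound; exists (u k); [exact: (Du k).2.1 | rewrite subrr normr0].
        by apply: le_ereal_inf_tmp => _ [w _ <-]; rewrite lee_fin.
      exact: cvg_cst.
  + move=> y Ky.
    have fc : (fun n => - f y (u n)) @ \oo --> - f y x.
      apply: cvgN.
      apply/cvgrPdist_lt => eps eps0.
      have [|delta d0 hd] := hB2 [set p | p.1 = y /\ `|p.2| <= `|y| + `|x| + 1] _ eps eps0.
        exists (`|y| + `|x| + 1) => p [-> h]; split => //.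
        have := normr_ge0 x; lra.
      have md : 0 < Num.min delta 1 by rewrite lt_min d0 ltr01.
      move/cvgrPdist_lt: ux => /(_ _ md).
      apply: filterS => n; rewrite lt_min => /andP [hn1 hn2].
      apply: (hd (y, x) (y, u n)) => /=.
      - split => //; have := normr_ge0 y; lra.
      - split => //.
        have : `|u n| <= `|u n - x| + `|x|.
          by rewrite -{1}(subrK x (u n)) ler_normD.
        rewrite distrC; have := normr_ge0 y; lra.
      - by rewrite subrr normr0.
      - exact: hn1.
    by apply: (closed_cvg C clC _ _ fc); apply: nearW => n; exact: (Du n).2.2 y Ky.
- move=> x1 x2 t [K1 [T1 C1]] [K2 [T2 C2]] t01.
  set z := t *: x1 + (1 - t) *: x2.
  have Kz : K z by apply: cvK.
  split => //; split.
  + have [s hs] := qS1 z Kz.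
    have h1 := qS3 x1 z s (FixS_of _ K1 T1) Kz hs.
    have h2 := qS3 x2 z s (FixS_of _ K2 T2) Kz hs.
    have Ez : forall phi, cont_linear_functional phi ->
        phi z = t * phi x1 + (1 - t) * phi x2.
      by move=> phi hp; rewrite /z (linD _ _ hp) !(linZ _ _ hp).
    have id : bregman g dg z s = t * (bregman g dg x1 s - bregman g dg x1 z)
        + (1 - t) * (bregman g dg x2 s - bregman g dg x2 z).
      rewrite /bregman !(linB _ _ (hl s)) !(linB _ _ (hl z)) (Ez _ (hl s)) (Ez _ (hl z)); ring.
    have [zs|zs] := eqVneq z s; first by rewrite {2}zs; exact: hs.1.
    have := bregman_pos z s tc zs; rewrite id.
    move: t01 => /andP [t0 t1].
    nra.
  + move=> y Ky.
    have h := hB3 y x1 x2 t t01; rewrite /cone_le in h.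
    move: t01 => /andP [t0 t1].
    have := Cadd _ _ h (Cadd _ _ (scC t _ t0 (C1 y Ky)) (scC (1 - t) _ ltac:(lra) (C2 y Ky))).
    by congr C; rewrite !scalerN -/z -opprD addrAC subrr add0r.
Qed.
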